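(* (a) If $V_T(\cdot)$ is continuous on $Y$ for every natural number $T$, then $\limsup_{T\to\infty}V_T(y_0)\le k^*(y_0)$ for all $y_0\in Y$. (b) If $h_\alpha(\cdot)$ is continuous on $Y$ for every $\alpha\in(0,1)$, then $\limsup_{\alpha\uparrow1}h_\alpha(y_0)\le k^*(y_0)$ for all $y_0\in Y$.
   Context: Let $Y\subset\mathbb{R}^m$ be nonempty compact, $U_0$ a compact metric space, $U(\cdot):Y\rightsquigarrow U_0$ upper semicontinuous and compact-valued, and $f:\mathbb{R}^m\times U_0\to\mathbb{R}^m$, $k:\mathbb{R}^m\times U_0\to\mathbb{R}$ continuous. Put $A(y):=\{u\in U(y): f(y,u)\in Y\}$ and $G:=\{(y,u):y\in Y,\ u\in A(y)\}$. Standing assumption: $A(y)\ne\emptyset$ for all $y\in Y$. For $y_0\in Y$, an admissible process on $\{0,\dots,T-1\}$ (respectively on $\{0,1,\dots\}$) is a pair $(y(t),u(t))$ with $y(0)=y_0$, $u(t)\in A(y(t))$ and $y(t+1)=f(y(t),u(t))$. The controls of such processes form $\mathcal U_T(y_0)$ (respectively $\mathcal U(y_0)$). Value functions: $$V_T(y_0):=\frac1T\min_{u\in\mathcal U_T(y_0)}\sum_{t=0}^{T-1}k(y(t),u(t)),\qquad h_\alpha(y_0):=(1-\alpha)\min_{u\in\mathcal U(y_0)}\sum_{t=0}^{\infty}\alpha^tk(y(t),u(t)).$$ LP value: - $\mathcal P(G)$ denotes the Borel probability measures on $G$ and $\mathcal M_+(G)$ the finite nonnegative Borel measures on $G$. -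 $W:=\{\gamma\in\mathcal P(G):\int_G(\varphi(f(y,u))-\varphi(y))\,d\gamma=0\ \forall\varphi\in C(Y)\}$. - $k^*(y_0)$ is the infimum of $\int_Gk(y,u)\,\gamma(dy,du)$ over pairs $(\gamma,\xi)\in\mathcal P(G)\times\mathcal M_+(G)$ with $\gamma\in W$ and $\int_G(\varphi(y_0)-\varphi(y))\,\gamma(dy,du)+\int_G(\varphi(f(y,u))-\varphi(y))\,\xi(dy,du)=0$ for all $\varphi\in C(Y)$. *)

(* Defs.v *)
From HB Require Import structures.
From mathcomp Require Import all_boot all_order all_algebra.
From mathcomp Require Import all_classical all_reals all_analysis.
Set Implicit Arguments. Unset Strict Implicit. Unset Printing Implicit Defensive.
Import Order.TTheory GRing.Theory Num.Theory.
Import numFieldNormedType.Exports.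
Local Open Scope classical_set_scope.
Local Open Scope ring_scope.

Definition traj (R : realType) (m : nat) (U0 : Type)
  (f : 'rV[R]_m * U0 -> 'rV[R]_m) (y0 : 'rV[R]_m) (u : nat -> U0) : nat -> 'rV[R]_m :=
  fix go n := match n with 0%N => y0 | n'.+1 => f (go n', u n') end.

Definition Aset (R : realType) (m : nat) (U0 : Type) (Y : set 'rV[R]_m)
  (U : 'rV[R]_m -> set U0) (f : 'rV[R]_m * U0 -> 'rV[R]_m) (y : 'rV[R]_m) : set U0 :=
  [set u | U y u /\ Y (f (y, u))].

Definition Gset (R : realType) (m : nat) (U0 : Type) (Y : set 'rV[R]_m)
  (U : 'rV[R]_m -> set U0) (f : 'rV[R]_m * U0 -> 'rV[R]_m) : set ('rV[R]_m * U0) :=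
  [set z | Y z.1 /\ Aset Y U f z.1 z.2].

(* controls of admissible processes on {0,...,T-1} (only u(0..T-1) matter) *)
Definition admissibleT (R : realType) (m : nat) (U0 : Type) (Y : set 'rV[R]_m)
  (U : 'rV[R]_m -> set U0) (f : 'rV[R]_m * U0 -> 'rV[R]_m) (T : nat)
  (y0 : 'rV[R]_m) : set (nat -> U0) :=
  [set u | forall t, (t < T)%N -> Aset Y U f (traj f y0 u t) (u t)].

Definition admissible (R : realType) (m : nat) (U0 : Type) (Y : set 'rV[R]_m)
  (U : 'rV[R]_m -> set U0) (f : 'rV[R]_m * U0 -> 'rV[R]_m)
  (y0 : 'rV[R]_m) : set (nat -> U0) :=
  [set u | forall t, Aset Y U f (traj f y0 u t) (u t)].

Definition VT (R : realType) (m : nat) (U0 : Type) (Y : set 'rV[R]_m)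
  (U : 'rV[R]_m -> set U0) (f : 'rV[R]_m * U0 -> 'rV[R]_m)
  (k : 'rV[R]_m * U0 -> R) (T : nat) (y0 : 'rV[R]_m) : R :=
  inf [set (T%:R)^-1 * \sum_(0 <= t < T) k (traj f y0 u t, u t)
      | u in admissibleT Y U f T y0].

Definition halpha (R : realType) (m : nat) (U0 : Type) (Y : set 'rV[R]_m)
  (U : 'rV[R]_m -> set U0) (f : 'rV[R]_m * U0 -> 'rV[R]_m)
  (k : 'rV[R]_m * U0 -> R) (alpha : R) (y0 : 'rV[R]_m) : R :=
  (1 - alpha) * inf [set limn (fun n => \sum_(0 <= t < n) alpha ^+ t * k (traj f y0 u t, u t))
      | u in admissible Y U f y0].

Definition borelRU (R : realType) (m : nat) (U0 : pseudoPMetricType R) :=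
  g_sigma_algebraType (@open ('rV[R]_m * U0)%type).

(* LP value k*(y0): infimum of int_G k dgamma over pairs (gamma, xi) with
   gamma a Borel probability measure on G, xi a finite nonnegative Borel
   measure on G (both realised as measures on R^m x U0 concentrated on G),
   gamma in W, and the second linear constraint, for all phi in C(Y). *)
Definition kstar (R : realType) (m : nat) (U0 : pseudoPMetricType R)
  (Y : set 'rV[R]_m) (U : 'rV[R]_m -> set U0) (f : 'rV[R]_m * U0 -> 'rV[R]_m)
  (k : 'rV[R]_m * U0 -> R) (y0 : 'rV[R]_m) : \bar R :=
  let G : set (@borelRU R m U0) := Gset Y U f in
  ereal_inf [set x | exists (gamma : probability (@borelRU R m U0) R)
                            (xi : {finite_measure set (@borelRU R m U0) -> \bar R}),
     [/\ gamma (~` G) = 0%E, xi (~` G) = 0%E,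
         (forall phi : 'rV[R]_m -> R, {within Y, continuous phi} ->
            (\int[gamma]_(z in G) (phi (f z) - phi z.1)%:E = 0)%E),
         (forall phi : 'rV[R]_m -> R, {within Y, continuous phi} ->
            (\int[gamma]_(z in G) (phi y0 - phi z.1)%:E
             + \int[xi]_(z in G) (phi (f z) - phi z.1)%:E = 0)%E)
       & x = (\int[gamma]_(z in G) (k z)%:E)%E]].

(* Main.v *)
Require Import Defs.
From HB Require Import structures.
From mathcomp Require Import all_boot all_order all_algebra.
From mathcomp Require Import all_classical all_reals all_analysis.
From mathcomp Require Import lra.
Import Order.TTheory GRing.Theory Num.Theory.
Import numFieldNormedType.Exports.
Local Open Scope classical_set_scope.
Local Open Scope ring_scope.
Section Disc.
Variables (R : realType) (m : nat) (U0 : Type)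
  (Y : set 'rV[R]_m) (U : 'rV[R]_m -> set U0)
  (f : 'rV[R]_m * U0 -> 'rV[R]_m) (k : 'rV[R]_m * U0 -> R) (M : R).
Hypothesis M0 : 0 <= M.
Hypothesis hkM : forall z, Y z.1 -> `|k z| <= M.
Hypothesis hA : forall y, Y y -> Aset Y U f y !=set0.

Definition catu (a : U0) (v : nat -> U0) : nat -> U0 :=
  fun n => if n is n'.+1 then v n' else a.

Lemma traj_cat y a v n : traj f y (catu a v) n.+1 = traj f (f (y, a)) v n.
Proof. by elim: n => [//|n IH] /=; rewrite -IH. Qed.

Lemma trajY y v T : Y y -> admissibleT Y U f T y v ->
  forall t, (t <= T)%N -> Y (traj f y v t).
Proof.
move=> Yy adm; elim=> [//|t IH] tT /=.
by have [_ ] := adm t tT.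
Qed.

Definition sumT y v T := \sum_(0 <= t < T) k (traj f y v t, v t).

Lemma sumT_cat y a v T : sumT y (catu a v) T.+1 = k (y, a) + sumT (f (y, a)) v T.
Proof.
rewrite /sumT big_nat_recl //=; congr (_ + _).
by apply: eq_bigr => i _; rewrite -(traj_cat y a v i).
Qed.

Lemma sumT_S y v T : sumT y v T.+1 = sumT y v T + k (traj f y v T, v T).
Proof. by rewrite /sumT big_nat_recr. Qed.

Lemma admT_S y v T : admissibleT Y U f T.+1 y v -> admissibleT Y U f T y v.
Proof. by move=> h t tT; apply: h; apply: ltnW. Qed.

Lemma admT_cat y a v T : Aset Y U f y a -> admissibleT Y U f T (f (y, a)) v ->
  admissibleT Y U f T.+1 y (catu a v).
Proof.
move=> ha hv [|t] tT; first exact: ha.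
by move: (hv t tT); rewrite -traj_cat.
Qed.

Lemma adm_cat y a v : Aset Y U f y a -> admissible Y U f (f (y, a)) v ->
  admissible Y U f y (catu a v).
Proof.
move=> ha hv [|t]; first exact: ha.
by move: (hv t); rewrite -traj_cat.
Qed.

Lemma exists_adm y : Y y -> exists v, admissible Y U f y v.
Proof.
move=> Yy.
have ch : forall z, exists a, Y z -> Aset Y U f z a.
  move=> z; have [Yz|nYz] := pselect (Y z).
    by have [a ha] := hA z Yz; exists a.
  by have [a ha] := hA y Yy; exists a.
have [g hg] := choice ch.
pose s := fix s n := if n is n'.+1 then f (s n', g (s n')) else y.
exists (fun n => g (s n)).
have trs : forall n, traj f y (fun n => g (s n)) n = s n.
  by elim=> [//|n IH] /=; rewrite IH.
have Ys : forall n, Y (s n).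
  elim=> [//|n IH] /=; by have [] := hg _ IH.
by move=> t; rewrite trs; apply: hg.
Qed.

Lemma adm_admT y v T : admissible Y U f y v -> admissibleT Y U f T y v.
Proof. by move=> h t _; apply: h. Qed.

Lemma sumT_ge y v T : Y y -> admissibleT Y U f T y v -> - (T%:R * M) <= sumT y v T.
Proof.
move=> Yy adm; rewrite /sumT.
have -> : T%:R * M = \sum_(0 <= t < T) M.
  by rewrite sumr_const_nat subn0 mulr_natl.
rewrite -sumrN; apply: ler_sum_nat => t /andP[_ tT].
have := @hkM (traj f y v t, v t) (@trajY y v T Yy adm t (ltnW tT)).
by rewrite ler_norml => /andP[].
Qed.

Lemma kY_ge z : Y z.1 -> - M <= k z.
Proof. by move/hkM; rewrite ler_norml => /andP[]. Qed.
Lemma kY_le z : Y z.1 -> k z <= M.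
Proof. by move/hkM; rewrite ler_norml => /andP[]. Qed.


Definition VS T y := [set T%:R^-1 * sumT y v T | v in admissibleT Y U f T y].

Lemma VS_ne T y : Y y -> VS T y !=set0.
Proof.
move=> Yy; have [v hv] := exists_adm _ Yy.
by exists (T%:R^-1 * sumT y v T); exists v => //; apply: adm_admT.
Qed.

Lemma VS_lb T y : Y y -> lbound (VS T y) (- M).
Proof.
move=> Yy _ [v hv <-]; case: T hv => [|T] hv.
  by rewrite /sumT big_geq // mulr0 oppr_le0.
have := sumT_ge _ _ _ Yy hv; rewrite -(@ler_pM2l _ (T.+1%:R^-1)) ?invr_gt0 ?ltr0Sn //.
by rewrite mulrN mulrA mulVf ?pnatr_eq0 // mul1r.
Qed.

Lemma V_le T y v : Y y -> admissibleT Y U f T y v ->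
  VT Y U f k T y <= T%:R^-1 * sumT y v T.
Proof.
move=> Yy hv; apply: ge_inf; first by exists (- M); exact: VS_lb.
by exists v.
Qed.

Lemma V_ex T y e : Y y -> 0 < e ->
  exists2 v, admissibleT Y U f T y v & T%:R^-1 * sumT y v T < VT Y U f k T y + e.
Proof.
move=> Yy e0; have := @inf_lt _ (VS T y) (VT Y U f k T y + e) (VS_ne T _ Yy).
rewrite ltrDl => /(_ e0) [_ [v hv <-] lt]; by exists v.
Qed.

Lemma W_le T y v : Y y -> admissibleT Y U f T y v ->
  T%:R * VT Y U f k T y <= sumT y v T.
Proof.
move=> Yy hv; case: T hv => [|T] hv.
  by rewrite mul0r /sumT big_geq.
rewrite -(@ler_pM2l _ (T.+1%:R^-1)) ?invr_gt0 ?ltr0Sn //.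
by rewrite mulrA mulVf ?pnatr_eq0 // mul1r; apply: V_le.
Qed.

Lemma W_ex T y e : Y y -> 0 < e ->
  exists2 v, admissibleT Y U f T y v & sumT y v T < T%:R * VT Y U f k T y + e.
Proof.
move=> Yy e0; case: T => [|T].
  have [v hv] := exists_adm _ Yy; exists v; first exact: adm_admT.
  by rewrite /sumT big_geq // mul0r add0r.
have [v hv lt] := V_ex T.+1 _ _ Yy (divr_gt0 e0 (ltr0Sn _ T)).
exists v => //.
rewrite -(@ltr_pM2l _ (T.+1%:R^-1)) ?invr_gt0 ?ltr0Sn //.
by rewrite mulrDr mulrA mulVf ?pnatr_eq0 // mul1r (mulrC _ e).
Qed.

Lemma W_DP T y a : Y y -> Aset Y U f y a ->
  T.+1%:R * VT Y U f k T.+1 y <= k (y, a) + T%:R * VT Y U f k T (f (y, a)).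
Proof.
move=> Yy ha; apply/ler_addgt0Pr => e e0.
have [v hv lt] := W_ex T _ e ha.2 e0.
apply: (le_trans (W_le _ _ _ Yy (admT_cat _ _ _ _ ha hv))).
by rewrite sumT_cat -addrA lerD2l ltW.
Qed.

Lemma W_mono T z : Y z ->
  T%:R * VT Y U f k T z <= T.+1%:R * VT Y U f k T.+1 z + M.
Proof.
move=> Yz; apply/ler_addgt0Pr => e e0.
have [v hv lt] := W_ex T.+1 z e Yz e0.
apply: (le_trans (W_le _ _ _ Yz (admT_S _ _ _ hv))).
have : sumT z v T <= sumT z v T.+1 + M.
  rewrite sumT_S -addrA lerDl -lerBlDr sub0r.
  exact: (@kY_ge (traj f z v T, v T)) (@trajY z v T.+1 Yz hv T (leqnSn T)).
move=> /le_trans; apply.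
by rewrite addrAC lerD2r ltW.
Qed.

Lemma W_diff T y a : Y y -> Aset Y U f y a ->
  T.+1%:R * VT Y U f k T.+1 y - T.+1%:R * VT Y U f k T.+1 (f (y, a)) <= M + M.
Proof.
move=> Yy ha; rewrite lerBlDr.
apply: (le_trans (W_DP T _ _ Yy ha)).
have := W_mono T _ ha.2; rewrite -(lerD2l (k (y, a))) => /le_trans; apply.
have := @kY_le (y, a) Yy; lra.
Qed.


Section Disc2.
Variable alpha : R.
Hypothesis a0 : 0 < alpha.
Hypothesis a1 : alpha < 1.

Definition pS y v n := \sum_(0 <= t < n) alpha ^+ t * k (traj f y v t, v t).

Lemma trajYinf y v t : Y y -> admissible Y U f y v -> Y (traj f y v t).
Proof. by move=> Yy hv; apply: (@trajY y v t Yy (adm_admT _ _ t hv) t). Qed.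

Definition pA y v t := alpha ^+ t * (k (traj f y v t, v t) + M).

Lemma pS_decomp y v : pS y v = series (pA y v) - series (geometric M alpha).
Proof.
apply/funext => n.
rewrite [RHS](_ : _ = series (pA y v) n - series (geometric M alpha) n) //.
rewrite /pS /series /= -sumrB.
by apply: eq_bigr => t _; rewrite /pA /= mulrDr [M * _]mulrC addrK.
Qed.

Lemma pS_cvg y v : Y y -> admissible Y U f y v -> cvgn (pS y v).
Proof.
move=> Yy hv; rewrite (pS_decomp y v).
have ga : `|alpha| < 1 by rewrite ger0_norm // ltW.
apply: is_cvgB; last exact: is_cvg_geometric_series.
apply: (@series_le_cvg _ _ (geometric (M + M) alpha)).
- move=> t; rewrite /pA; apply: mulr_ge0; first exact: exprn_ge0 (ltW a0).
  by rewrite -lerBlDr sub0r; apply: kY_ge; apply: trajYinf.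
- by move=> t; apply: geometric_ge0 => //; [exact: addr_ge0|exact: ltW].
- move=> t /=; rewrite /pA mulrC ler_wpM2r //; first exact: exprn_ge0 (ltW a0).
  by rewrite lerD2r; apply: kY_le; apply: trajYinf.
- exact: is_cvg_geometric_series.
Qed.
Lemma pS_ge y v n : Y y -> admissible Y U f y v -> - (M / (1 - alpha)) <= pS y v n.
Proof.
move=> Yy hv; rewrite (pS_decomp y v).
rewrite [X in _ <= X](_ : _ = series (pA y v) n - series (geometric M alpha) n) //.
have ga : `|alpha| < 1 by rewrite ger0_norm // ltW.
have Hb := @geometric_le_lim R n M alpha M0 a0 ga.
have Ha : 0 <= series (pA y v) n.
  rewrite /series /=; apply: sumr_ge0 => t _; rewrite /pA.
  apply: mulr_ge0; first exact: exprn_ge0 (ltW a0).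
  by rewrite -lerBlDr sub0r; apply: kY_ge; apply: trajYinf.
move: (series (pA y v) n) (series (geometric M alpha) n) (M / (1 - alpha)) Ha Hb.
move=> p q x; lra.
Qed.

Lemma L_ge y v : Y y -> admissible Y U f y v -> - (M / (1 - alpha)) <= limn (pS y v).
Proof.
move=> Yy hv; apply: limr_ge; first exact: pS_cvg.
by near=> n; apply: pS_ge.
Unshelve. all: by end_near.
Qed.

Lemma pS_cat y a v n : pS y (catu a v) n.+1 = k (y, a) + alpha * pS (f (y, a)) v n.
Proof.
rewrite /pS big_nat_recl // expr0 mul1r; congr (_ + _).
rewrite mulr_sumr; apply: eq_bigr => i _.
by rewrite -(traj_cat y a v i) exprS mulrA.
Qed.

Lemma L_cat y a v : Aset Y U f y a -> admissible Y U f (f (y, a)) v ->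
  limn (pS y (catu a v)) = k (y, a) + alpha * limn (pS (f (y, a)) v).
Proof.
move=> ha hv; apply: cvg_lim => //.
rewrite -cvg_shiftS.
have -> : [sequence pS y (catu a v) n.+1]_n = (fun n => k (y, a) + alpha * pS (f (y, a)) v n).
  by apply/funext => n /=; rewrite pS_cat.
apply: cvgD; first exact: cvg_cst.
apply: cvgMl_tmp; exact: pS_cvg ha.2 hv.
Qed.

Definition HS y := [set limn (pS y v) | v in admissible Y U f y].

Lemma HS_ne y : Y y -> HS y !=set0.
Proof. by move=> Yy; have [v hv] := exists_adm _ Yy; exists (limn (pS y v)); exists v. Qed.

Lemma HS_lb y : Y y -> lbound (HS y) (- (M / (1 - alpha))).
Proof. by move=> Yy _ [v hv <-]; apply: L_ge. Qed.

Lemma hE y : halpha Y U f k alpha y = (1 - alpha) * inf (HS y).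
Proof. by []. Qed.

Lemma h_ge y : Y y -> - M <= halpha Y U f k alpha y.
Proof.
move=> Yy; rewrite hE.
have a10 : 0 < 1 - alpha by rewrite subr_gt0.
have H := lb_le_inf (HS_ne _ Yy) (HS_lb _ Yy).
rewrite -(@ler_pM2l _ (1 - alpha)) // in H; apply: le_trans H.
by rewrite mulrN mulrCA mulfV ?mulr1 // gt_eqF.
Qed.

Lemma h_DP y a : Y y -> Aset Y U f y a ->
  halpha Y U f k alpha y <= (1 - alpha) * k (y, a) + alpha * halpha Y U f k alpha (f (y, a)).
Proof.
move=> Yy ha; rewrite !hE.
have a10 : 0 < 1 - alpha by rewrite subr_gt0.
rewrite mulrCA -mulrDr ler_pM2l //.
apply/ler_addgt0Pr => e e0.
have Yz := ha.2.
have [_ [v hv <-] lt] := @inf_lt _ (HS (f (y, a))) (inf (HS (f (y, a))) + e / alpha)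
   (HS_ne _ Yz) ltac:(by rewrite ltrDl divr_gt0).
have : inf (HS y) <= limn (pS y (catu a v)).
  apply: ge_inf; first by exists (- (M / (1 - alpha))); exact: HS_lb.
  by exists (catu a v) => //; apply: adm_cat.
rewrite L_cat // => /le_trans; apply.
rewrite -addrA lerD2l.
have := ltW lt; rewrite -(@ler_pM2l _ alpha) // mulrDr mulrCA mulfV ?mulr1 //.
by rewrite gt_eqF.
Qed.

Lemma h_diff y a : Y y -> Aset Y U f y a ->
  halpha Y U f k alpha y - halpha Y U f k alpha (f (y, a)) <= (1 - alpha) * (M + M).
Proof.
move=> Yy ha.
have := h_DP _ _ Yy ha; have := h_ge _ ha.2; have := @kY_le (y, a) Yy.
have a10 : 0 < 1 - alpha by rewrite subr_gt0.
set h1 := halpha _ _ _ _ _ y; set h2 := halpha _ _ _ _ _ _; set kk := k _.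
move=> k1 h2g hd.
have : (1 - alpha) * kk <= (1 - alpha) * M by rewrite ler_pM2l.
have : (1 - alpha) * (- h2) <= (1 - alpha) * M by rewrite ler_pM2l // lerNl.
nra.
Qed.

End Disc2.

End Disc.
Lemma cont_bounded (T : topologicalType) (R : realType) (S : set T) (phi : T -> R) :
  compact S -> {within S, continuous phi} -> exists2 B, 0 < B & forall x, S x -> `|phi x| <= B.
Proof.
move=> cS cphi.
have := compact_bounded (continuous_compact cphi cS).
move=> /ex_strict_bound_gt0 [B B0 HB]; exists B => // x Sx.
apply: ltW; apply: (HB (phi x)); by exists x.
Qed.

Section Topo.
Variables (R : realType) (m : nat) (U0 : pseudoPMetricType R)
  (Y : set 'rV[R]_m) (U : 'rV[R]_m -> set U0)
  (f : 'rV[R]_m * U0 -> 'rV[R]_m).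
Hypotheses (hY : compact Y) (hU0T2 : hausdorff_space U0) (hU0 : compact [set: U0])
  (hUusc : forall y, Y y -> forall O : set U0, open O -> U y `<=` O ->
             \forall y' \near y, Y y' -> U y' `<=` O)
  (hUcpt : forall y, Y y -> compact (U y))
  (hf : continuous f).

Lemma Y_closed : closed Y.
Proof. apply: compact_closed => //; exact: norm_hausdorff. Qed.

Lemma G_closed : closed (Gset Y U f).
Proof.
rewrite -[Gset Y U f]setCK; apply: open_closedC.
rewrite openE => -[y u] nG.
have oYC : open (~` Y) by apply: closed_openC; exact: Y_closed.
have [Yy|nY] := pselect (Y y); last first.
  exists ((~` Y), setT) => /=; first by split; [apply: open_nbhs_nbhs; split | exact: filterT].
  by move=> [a b] /= [nYa _] [].
have [Yf|nYf] := pselect (Y (f (y, u))); last first.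
  have : nbhs (f (y, u)) (~` Y) by apply: open_nbhs_nbhs.
  move=> /(hf (y, u)) => h; have h2 : nbhs (y, u) (f @^-1` (~` Y)) := h.
  change (nbhs (y, u) (~` Gset Y U f)); move: h2; apply: filterS => -[a b] /= nYz [_ []] _ Yfz; exact: nYz Yfz.
have nU : ~ U y u by move=> Uyu; apply: nG; split => //.
have cU : closed (U y) by apply: compact_closed => //; exact: hUcpt.
have nT : nbhs u [set: U0] by exact: filterT.
have := @compact_regular _ u setT hU0T2 hU0 nT.
move=> /(_ (~` U y)) [].
  by apply: open_nbhs_nbhs; split => //; exact: closed_openC.
move=> C nC sC.
have oO : open (~` closure C) by apply: closed_openC; exact: closed_closure.
have sub : U y `<=` ~` closure C by move=> v Uv clv; exact: (sC v clv).
have nearY := hUusc y Yy _ oO sub.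
exists ([set y' | Y y' -> U y' `<=` ~` closure C], C) => /=; first by split.
move=> [a b] [/= Ha Cb] [Ya [Uab _]].
by apply: (Ha Ya b Uab); apply: subset_closure.
Qed.


Lemma open_meas (A : set ('rV[R]_m * U0)) : open A -> measurable (A : set (@borelRU R m U0)).
Proof. by move=> oA; apply: sub_sigma_algebra. Qed.

Lemma G_meas : measurable (Gset Y U f : set (@borelRU R m U0)).
Proof.
rewrite -[Gset Y U f]setCK; apply: measurableC; apply: open_meas.
exact/closed_openC/G_closed.
Qed.

Lemma meas_comp (phi : 'rV[R]_m -> R) (p : 'rV[R]_m * U0 -> 'rV[R]_m) :
  {within Y, continuous phi} -> continuous p -> (forall z, Gset Y U f z -> Y (p z)) ->
  measurable_fun (Gset Y U f : set (@borelRU R m U0)) (fun z => phi (p z)).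
Proof.
move=> cphi cp pY.
apply: (measurability _ (measurable_realfun.RGenOpens.measurableE R)) => _ [_ [a [b ->] <-]].
have oB : open (`]a, b[%classic : set R) by exact: interval_open.
have := (continuousP _).1 cphi _ oB => /open_subspaceP [V oV VE].
have -> : Gset Y U f `&` (fun z => phi (p z)) @^-1` `]a, b[%classic = Gset Y U f `&` p @^-1` V.
  apply/seteqP; split => z [Gz Hz]; split => //.
    have : (phi @^-1` `]a, b[%classic `&` Y) (p z) by split => //; exact: pY.
    by rewrite -VE => -[].
  have : (V `&` Y) (p z) by split => //; exact: pY.
  by rewrite VE => -[].
apply: measurableI; first exact: G_meas.
by apply: open_meas; move/continuousP: cp; apply.
Qed.


Lemma integ (mu : {finite_measure set (@borelRU R m U0) -> \bar R}) (g : 'rV[R]_m * U0 -> R) B :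
  measurable_fun (Gset Y U f : set (@borelRU R m U0)) g ->
  (forall z, Gset Y U f z -> `|g z| <= B) ->
  mu.-integrable (Gset Y U f : set (@borelRU R m U0)) (EFin \o g).
Proof.
move=> mg hB; apply: measurable_bounded_integrable => //.
- exact: G_meas.
- by rewrite ltey_eq (fin_num_measure mu _ G_meas).
- exists B; split; first exact: num_real.
  move=> M BM z Gz /=; exact: le_trans (hB z Gz) (ltW BM).
Qed.

Lemma integ_comp (mu : {finite_measure set (@borelRU R m U0) -> \bar R})
  (phi : 'rV[R]_m -> R) (p : 'rV[R]_m * U0 -> 'rV[R]_m) :
  {within Y, continuous phi} -> continuous p -> (forall z, Gset Y U f z -> Y (p z)) ->
  mu.-integrable (Gset Y U f : set (@borelRU R m U0)) (EFin \o (fun z => phi (p z))).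
Proof.
move=> cphi cp pY; have [B _ hB] := cont_bounded _ _ _ _ hY cphi.
apply: (@integ mu _ B); first exact: meas_comp.
by move=> z Gz; apply: hB; apply: pY.
Qed.

Lemma meas_cont (g : 'rV[R]_m * U0 -> R) : continuous g ->
  measurable_fun (Gset Y U f : set (@borelRU R m U0)) g.
Proof.
move=> cg; apply: (measurability _ (measurable_realfun.RGenOpens.measurableE R)) => _ [_ [a [b ->] <-]].
apply: measurableI; first exact: G_meas.
apply: open_meas; move/continuousP: cg; apply; exact: interval_open.
Qed.

Lemma fst_cont : continuous (@fst 'rV[R]_m U0).
Proof. by move=> x; apply: cvg_fst. Qed.

Lemma G_fst z : Gset Y U f z -> Y z.1.
Proof. by case. Qed.

Lemma G_f z : Gset Y U f z -> Y (f z).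
Proof. by case: z => a b [_ []]. Qed.

End Topo.

Section Meas.
Variables (R : realType) (m : nat) (U0 : pseudoPMetricType R)
  (Y : set 'rV[R]_m) (U : 'rV[R]_m -> set U0)
  (f : 'rV[R]_m * U0 -> 'rV[R]_m).
Hypotheses (hY : compact Y) (hU0T2 : hausdorff_space U0) (hU0 : compact [set: U0])
  (hUusc : forall y, Y y -> forall O : set U0, open O -> U y `<=` O ->
             \forall y' \near y, Y y' -> U y' `<=` O)
  (hUcpt : forall y, Y y -> compact (U y))
  (hf : continuous f).
Variables (gamma : probability (@borelRU R m U0) R)
  (xi : {finite_measure set (@borelRU R m U0) -> \bar R}) (y0 : 'rV[R]_m).
Let G : set (@borelRU R m U0) := Gset Y U f.
Hypothesis hg0 : gamma (~` G) = 0%E.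
Hypothesis hI : forall phi : 'rV[R]_m -> R, {within Y, continuous phi} ->
            (\int[gamma]_(z in G) (phi (f z) - phi z.1)%:E = 0)%E.
Hypothesis hII : forall phi : 'rV[R]_m -> R, {within Y, continuous phi} ->
            (\int[gamma]_(z in G) (phi y0 - phi z.1)%:E
             + \int[xi]_(z in G) (phi (f z) - phi z.1)%:E = 0)%E.

Let mG : measurable G.
Proof. by apply: G_meas. Qed.

Lemma gammaG : gamma G = 1%E.
Proof.
have h := probability_setC gamma mG; rewrite hg0 in h.
have hfin : gamma G \is a fin_num := fin_num_measure gamma G mG.
rewrite -(fineK hfin) in h *; move: (fine (gamma G)) h => r.
rewrite -EFinB => /eqP; rewrite eqe eq_sym subr_eq0 => /eqP <-.
done.
Qed.


Lemma int_fst (mu : {finite_measure set (@borelRU R m U0) -> \bar R}) phi :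
  {within Y, continuous phi} -> mu.-integrable G (EFin \o (fun z => phi z.1)).
Proof. move=> c; apply: integ_comp => //; [exact: fst_cont | exact: G_fst]. Qed.

Lemma int_f (mu : {finite_measure set (@borelRU R m U0) -> \bar R}) phi :
  {within Y, continuous phi} -> mu.-integrable G (EFin \o (fun z => phi (f z))).
Proof. move=> c; apply: integ_comp => //; exact: G_f. Qed.

Lemma int_cst (mu : {finite_measure set (@borelRU R m U0) -> \bar R}) (r : R) :
  mu.-integrable G (EFin \o (fun _ => r)).
Proof.
apply: (@integ _ _ _ _ _ _ hY hU0T2 hU0 hUusc hUcpt hf mu _ `|r|) => //.
Qed.

Lemma int_E (mu : {finite_measure set (@borelRU R m U0) -> \bar R}) (g : 'rV[R]_m * U0 -> R) :
  mu.-integrable G (EFin \o g) ->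
  (\int[mu]_(z in G) (g z)%:E)%E = (\int[mu]_(z in G) g z)%:E.
Proof. by move=> ig; rewrite /Rintegral fineK // integrable_fin_num. Qed.

Lemma inv_eq phi : {within Y, continuous phi} ->
  \int[gamma]_(z in G) phi (f z) = \int[gamma]_(z in G) phi z.1.
Proof.
move=> c; apply/eqP; rewrite -subr_eq0 -RintegralB //; [|exact: int_f|exact: int_fst].
by rewrite /Rintegral hI //.
Qed.

Lemma key2 phi c D : {within Y, continuous phi} ->
  \int[gamma]_(z in G) phi z.1 <= c ->
  (forall z, G z -> phi z.1 - phi (f z) <= D) ->
  phi y0 <= c + D * fine (xi G).
Proof.
move=> cphi hc hD.
have iB1 : gamma.-integrable G (EFin \o (fun z => phi y0 - phi z.1)).
  have -> : EFin \o (fun z : 'rV[R]_m * U0 => phi y0 - phi z.1) =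
    ((EFin \o (fun _ : 'rV[R]_m * U0 => phi y0)) \- (EFin \o (fun z : 'rV[R]_m * U0 => phi z.1)))%E.
    by apply: boolp.funext => z /=; rewrite EFinB.
  by apply: integrableB => //; [exact: int_cst|exact: int_fst].
have iB2 : xi.-integrable G (EFin \o (fun z => phi (f z) - phi z.1)).
  have -> : EFin \o (fun z : 'rV[R]_m * U0 => phi (f z) - phi z.1) =
    ((EFin \o (fun z : 'rV[R]_m * U0 => phi (f z))) \- (EFin \o (fun z : 'rV[R]_m * U0 => phi z.1)))%E.
    by apply: boolp.funext => z /=; rewrite EFinB.
  by apply: integrableB => //; [exact: int_f|exact: int_fst].
have := hII phi cphi; rewrite (int_E _ _ iB1) (int_E _ _ iB2) -EFinD => /eqP; rewrite eqe => /eqP H.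
rewrite RintegralB // in H; [|exact: int_cst|exact: int_fst].
rewrite Rintegral_cst // [X in _ * X](_ : _ = 1) ?mulr1 in H; last first.
  exact: (congr1 fine gammaG).

have : \int[xi]_(z in G) (- D) <= \int[xi]_(z in G) (phi (f z) - phi z.1).
  apply: le_Rintegral => //; first exact: int_cst.
  by move=> z Gz; rewrite lerNl opprB; apply: hD.
rewrite Rintegral_cst //.
move: H; set a := \int[gamma]_(z in G) phi z.1; set b := Rintegral _ _ _.
move=> H hb; move: hc; rewrite -/a.
have : 0 <= fine (xi G) by apply: fine_ge0; apply: measure_ge0.
nra.
Qed.

End Meas.


Lemma intZ d (T : measurableType d) (R : realType) (mu : {measure set T -> \bar R}) (D : set T)
  (g : T -> R) (r : R) : measurable D -> mu.-integrable D (EFin \o g) ->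
  mu.-integrable D (EFin \o (fun z => r * g z)).
Proof.
move=> mD ig; have := integrableZl mD r ig.
by rewrite (_ : (fun x => r%:E * (EFin \o g) x)%E = EFin \o (fun z => r * g z)) //; apply: boolp.funext.
Qed.

Lemma intD d (T : measurableType d) (R : realType) (mu : {measure set T -> \bar R}) (D : set T)
  (g1 g2 : T -> R) : measurable D -> mu.-integrable D (EFin \o g1) ->
  mu.-integrable D (EFin \o g2) ->
  mu.-integrable D (EFin \o (fun z => g1 z + g2 z)).
Proof.
move=> mD i1 i2; have := integrableD mD i1 i2.
by rewrite (_ : ((EFin \o g1) \+ (EFin \o g2))%E = EFin \o (fun z => g1 z + g2 z)) //; apply: boolp.funext.
Qed.

Lemma limsup_bound (R : realType) (u : nat -> R) c K : 0 <= K ->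
  (forall n, u n.+1 <= c + K / n.+1%:R) -> (limn_esup (fun n => (u n)%:E) <= c%:E)%E.
Proof.
move=> K0 hu; apply/lee_addgt0Pr => e e0.
pose N := (Num.truncn (K / e)).+1.
have KN : K / e < N%:R by exact: truncnS_gt.
apply: (@le_trans _ _ (ereal_sup ((fun n => (u n)%:E) @` [set n | (N <= n)%N]))).
  apply: ereal_inf_lbound; exists [set n | (N <= n)%N] => //.
  by exists N.
apply: ge_ereal_sup => _ [[|p] /= Np <-]; first by [].
rewrite lee_fin; apply: (le_trans (hu p)); rewrite lerD2l.
rewrite ler_pdivrMr ?ltr0Sn //.
rewrite ltr_pdivrMr // in KN; apply: (le_trans (ltW KN)).
by rewrite mulrC ler_wpM2l ?(ltW e0) // ler_nat.
Qed.

Lemma limsupL_bound (R : realType) (h : R -> R) c K : 0 <= K ->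
  (forall a, 0 < a -> a < 1 -> h a <= c + (1 - a) * K) ->
  (limf_esup (fun a => (h a)%:E) (at_left 1) <= c%:E)%E.
Proof.
move=> K0 hh; apply/lee_addgt0Pr => e e0.
pose del := Num.min 1 (e / (K + 1)).
have K1 : 0 < K + 1 by rewrite ltr_wpDl.
have d0 : 0 < del by rewrite lt_min ltr01 divr_gt0.
have d1 : del <= 1 by rewrite ge_min lexx.
have dK : del * K <= e.
  apply: (@le_trans _ _ (e / (K + 1) * K)); first by rewrite ler_wpM2r // ge_min lexx orbT.
  rewrite mulrAC ler_pdivrMr // ler_wpM2l ?(ltW e0) //; lra.
pose V := [set a : R | 1 - del < a /\ a < 1].
apply: (@le_trans _ _ (ereal_sup ((fun a => (h a)%:E) @` V))).
  apply: ereal_inf_lbound; exists V => //.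
  apply/nbhs_ballP; exists del => //= x; rewrite /ball /= => hx xl.
  split => //; move: hx; rewrite ltr_norml => /andP[_]; lra.
apply: ge_ereal_sup => _ [a [Va a1] <-].
rewrite lee_fin; apply: (le_trans (hh a _ a1)); first by lra.
rewrite lerD2l; apply: le_trans dK; rewrite ler_wpM2r //; lra.
Qed.

Theorem theorem3p1 (R : realType) (m : nat) (U0 : pseudoPMetricType R)
  (Y : set 'rV[R]_m) (U : 'rV[R]_m -> set U0)
  (f : 'rV[R]_m * U0 -> 'rV[R]_m) (k : 'rV[R]_m * U0 -> R)
  (hY : compact Y) (hY0 : Y !=set0)
  (hU0T2 : hausdorff_space U0) (hU0 : compact [set: U0])
  (hUusc : forall y, Y y -> forall O : set U0, open O -> U y `<=` O ->
             \forall y' \near y, Y y' -> U y' `<=` O)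
  (hUcpt : forall y, Y y -> compact (U y))
  (hf : continuous f) (hk : continuous k)
  (hA : forall y, Y y -> Aset Y U f y !=set0) :
  ((forall T : nat, (0 < T)%N -> {within Y, continuous (VT Y U f k T)}) ->
     forall y0, Y y0 ->
       (limn_esup (fun T : nat => (VT Y U f k T y0)%:E) <= kstar Y U f k y0)%E)
  /\
  ((forall alpha : R, 0 < alpha < 1 -> {within Y, continuous (halpha Y U f k alpha)}) ->
     forall y0, Y y0 ->
       (limf_esup (fun alpha : R => (halpha Y U f k alpha y0)%:E) (at_left 1)
          <= kstar Y U f k y0)%E).
Proof.
have [M M0' hkM0] := cont_bounded _ _ _ _ (compact_setX hY hU0) (continuous_subspaceT hk).
have hkM : forall z, Y z.1 -> `|k z| <= M by move=> z Yz; apply: hkM0; split.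
have M0 : 0 <= M := ltW M0'.
have mG := G_meas _ _ _ _ _ _ hY hU0T2 hU0 hUusc hUcpt hf.
have ik : forall mu : {finite_measure set (@borelRU R m U0) -> \bar R},
    mu.-integrable (Gset Y U f) (EFin \o k).
  move=> mu; apply: (@integ _ _ _ _ _ _ hY hU0T2 hU0 hUusc hUcpt hf mu _ M) => //.
    exact: meas_cont hk.
  by move=> z [Yz _]; apply: hkM.
split.
- move=> hV y0 Yy0; rewrite /kstar; apply: le_ereal_inf_tmp.
  move=> _ [gamma [xi [hg0 hx0 hI hII ->]]].
  have K2 := key2 _ _ _ _ _ _ hY hU0T2 hU0 hUusc hUcpt hf gamma xi y0 hg0 hII.
  have IE := inv_eq _ _ _ _ _ _ hY hU0T2 hU0 hUusc hUcpt hf gamma hI.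
  have ifst := int_fst _ _ _ _ _ _ hY hU0T2 hU0 hUusc hUcpt hf.
  have iff := int_f _ _ _ _ _ _ hY hU0T2 hU0 hUusc hUcpt hf.
  rewrite (int_E _ _ _ _ _ _ hY hU0T2 hU0 hUusc hUcpt hf gamma k (ik gamma)).
  have WDP := @W_DP _ _ _ _ _ _ _ _ M0 hkM hA.
  have Wd := @W_diff _ _ _ _ _ _ _ _ M0 hkM hA.
  pose a n := \int[gamma]_(z in Gset Y U f) VT Y U f k n z.1.
  have aT : forall n, n%:R * a n <= n%:R * \int[gamma]_(z in Gset Y U f) k z.
    elim=> [|n IH]; first by rewrite !mul0r.
    have step : n.+1%:R * a n.+1 <= \int[gamma]_(z in Gset Y U f) k z + n%:R * a n.
      have cV := hV n.+1 (ltn0Sn n).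
      rewrite /a -RintegralZl //; last exact: ifst.
      case: n IH cV => [|n] IH cV.
        rewrite mul0r addr0; apply: le_Rintegral => //.
        - by apply: intZ => //; exact: ifst.
        - exact: ik.
        - move=> [y b] [Yy hb] /=; have := WDP 0%N y b Yy hb; by rewrite mul0r addr0.
      have cV' := hV n.+1 (ltn0Sn n).
      rewrite -IE // -RintegralZl //; last exact: iff.
      rewrite -RintegralD //; [|exact: ik| by apply: intZ => //; exact: iff].
      apply: le_Rintegral => //.
      - by apply: intZ => //; exact: ifst.
      - by apply: intD => //; [exact: ik| apply: intZ => //; exact: iff].
      - move=> [y b] [Yy hb] /=; exact: WDP (n.+1) y b Yy hb.
    apply: (le_trans step); rewrite -nat1r mulrDl mul1r lerD2l; exact: IH.
  have aC : forall n, a n.+1 <= \int[gamma]_(z in Gset Y U f) k z.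
    by move=> n; have := aT n.+1; rewrite ler_pM2l // ltr0Sn.
  have bnd : forall n, VT Y U f k n.+1 y0 <=
      \int[gamma]_(z in Gset Y U f) k z + ((M + M) * fine (xi (Gset Y U f))) / n.+1%:R.
    move=> n; have := K2 (VT Y U f k n.+1) _ ((M + M) / n.+1%:R) (hV n.+1 (ltn0Sn n)) (aC n).
    rewrite mulrAC; apply.
    move=> [y b] [Yy hb] /=; rewrite ler_pdivlMr ?ltr0Sn // mulrBl !(mulrC _ n.+1%:R).
    exact: Wd n y b Yy hb.
  apply: (@limsup_bound _ (fun n => VT Y U f k n y0) _ _ _ bnd).
  apply: mulr_ge0; first exact: addr_ge0.
  by apply: fine_ge0; apply: measure_ge0.
- move=> hH y0 Yy0; rewrite /kstar; apply: le_ereal_inf_tmp.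
  move=> _ [gamma [xi [hg0 hx0 hI hII ->]]].
  have K2 := key2 _ _ _ _ _ _ hY hU0T2 hU0 hUusc hUcpt hf gamma xi y0 hg0 hII.
  have IE := inv_eq _ _ _ _ _ _ hY hU0T2 hU0 hUusc hUcpt hf gamma hI.
  have ifst := int_fst _ _ _ _ _ _ hY hU0T2 hU0 hUusc hUcpt hf.
  have iff := int_f _ _ _ _ _ _ hY hU0T2 hU0 hUusc hUcpt hf.
  rewrite (int_E _ _ _ _ _ _ hY hU0T2 hU0 hUusc hUcpt hf gamma k (ik gamma)).
  apply: (@limsupL_bound _ _ _ ((M + M) * fine (xi (Gset Y U f)))).
    by apply: mulr_ge0; [exact: addr_ge0 | apply: fine_ge0; apply: measure_ge0].
  move=> al a0 a1.
  have aa : 0 < al < 1 by rewrite a0 a1.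
  have ch := hH al aa.
  have hDP := @h_DP _ _ _ _ _ _ _ _ M0 hkM hA al a0 a1.
  have hd := @h_diff _ _ _ _ _ _ _ _ M0 hkM hA al a0 a1.
  have bC : \int[gamma]_(z in Gset Y U f) halpha Y U f k al z.1 <= \int[gamma]_(z in Gset Y U f) k z.
    have step : \int[gamma]_(z in Gset Y U f) halpha Y U f k al z.1 <=
        (1 - al) * \int[gamma]_(z in Gset Y U f) k z +
        al * \int[gamma]_(z in Gset Y U f) halpha Y U f k al z.1.
      rewrite -[X in _ <= _ + al * X]IE //.
      rewrite -(RintegralZl _ mG (ik gamma)) -(RintegralZl _ mG (iff gamma _ ch)).
      rewrite -RintegralD //; [|by apply: intZ => //; exact: ik| by apply: intZ => //; exact: iff].
      apply: le_Rintegral => //.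
      - exact: ifst.
      - by apply: intD => //; apply: intZ => //; [exact: ik|exact: iff].
      - move=> [y b] [Yy hb] /=; exact: hDP y b Yy hb.
    move: step; set x := Rintegral _ _ _; set c := Rintegral _ _ _ => step.
    have : (1 - al) * x <= (1 - al) * c by lra.
    by rewrite ler_pM2l // subr_gt0.
  have := K2 (halpha Y U f k al) _ ((1 - al) * (M + M)) ch bC.
  rewrite -mulrA; apply.
  move=> [y b] [Yy hb] /=; exact: hd y b Yy hb.
Qed.
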